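(* Let $\rho$ be a representation of $D^{2,2,2}$ and let $\{i,j,k\}=\{1,2,3\}$. With the notation of the context: 1. $\psi_i(x_i)=X^1_0$; 2. $\psi_i(x_j)=\psi_k(x_j)=\nu^0(y_iy_k)$; 3. $\psi_i(y_i)=\nu^0(x_i(y_j+y_k))$; 4. $\psi_i(y_j)=\nu^0(y_i(x_j+y_k))$; 5. $\psi_i(I)=\nu^0(y_i(y_j+y_k))$; 6. $\psi_i(y_jy_k)=\nu^0(y_i(x_j+x_k))$.
   Context: $D^{2,2,2}$ is the modular lattice generated by $x_1,y_1,x_2,y_2,x_3,y_3$ subject only to $x_i\subseteq y_i$ ($i=1,2,3$), with a greatest element $I$ adjoined. Meet is written $ab$, join $a+b$. A representation $\rho$ of $D^{2,2,2}$ in a finite-dimensional vector space $X_0$ is a lattice morphism from $D^{2,2,2}$ to the lattice of subspaces of $X_0$, with $\rho(I)=X_0$. Write $X_i=\rho(x_i)\subseteq Y_i=\rho(y_i)$. Put $R=Y_1\oplus Y_2\oplus Y_3$ (triples $(\eta_1,\eta_2,\eta_3)$ with $\eta_i\in Y_i$) and $X^1_0=\{(\eta_1,\eta_2,\eta_3)\in R:\sum\eta_i=0\}$. Define subspaces of $R$: - $G_i$: triples with $i$-th coordinate in $Y_i$ and other coordinates $0$; - $H_i$: triples with $i$-th coordinate in $X_i$ and other coordinates $0$; - $G'_i$: triples with $i$-th coordinate in $X_i$ and other coordinates arbitrary in the respective $Y$'s; - $H'_i$: triples with $i$-th coordinate $0$. The representation $\Phi^+\rho$ of $D^{2,2,2}$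 in $X^1_0$ is given by $\Phi^+\rho(y_i)=G'_i\cap X^1_0$, $\Phi^+\rho(x_i)=H'_i\cap X^1_0$ and $\Phi^+\rho(I)=X^1_0$. Set $\nu^1(a)=\Phi^+\rho(a)$, viewed as a subspace of $R$. $\nu^0$ is the representation of $D^{2,2,2}$ in $R$ with $\nu^0(y_i)=X^1_0+G_i$, $\nu^0(x_i)=X^1_0+H_i$, $\nu^0(I)=R$. The joint maps are defined by $\psi_i(a)=X^1_0+G_i\cap(H'_i+\nu^1(a))$ for $a\in D^{2,2,2}$. *)

(* Defs.v *)
From HB Require Import structures.
From mathcomp Require Import all_boot all_order all_algebra.
Set Implicit Arguments. Unset Strict Implicit. Unset Printing Implicit Defensive.
Import GRing.Theory.
Local Open Scope ring_scope.
Local Open Scope vspace_scope.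

(* Lattice terms over the generators of D^{2,2,2}: x_i, y_i (i : 'I_3),
   the adjoined top element I, meets and joins. *)
Inductive dterm : Type :=
  | tx of 'I_3
  | ty of 'I_3
  | tI
  | tmeet of dterm & dterm
  | tjoin of dterm & dterm.

(* A representation of
   D^{2,2,2} is exactly such an evaluation (with images of x_i inside
   images of y_i, all inside the image of I). *)
Fixpoint deval (K : fieldType) (W : vectType K)
    (gx gy : 'I_3 -> {vspace W}) (top : {vspace W}) (a : dterm) : {vspace W} :=
  match a with
  | tx i => gx i
  | ty i => gy i
  | tI => top
  | tmeet a b => (deval gx gy top a :&: deval gx gy top b)%VS
  | tjoin a b => (deval gx gy top a + deval gx gy top b)%VS
  end.

Section Construction.
Variables (K : fieldType) (V : vectType K).
Variables (Xs Ys : 'I_3 -> {vspace V}).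

Definition trip := {ffun 'I_3 -> V}.

Definition injc (i : 'I_3) : 'Hom(V, trip) :=
  linfun (fun v : V => [ffun j : 'I_3 => if j == i then v else 0%R] : trip).
Definition projc (i : 'I_3) : 'Hom(trip, V) := linfun (fun f : trip => f i).
Definition sumc : 'Hom(trip, V) := linfun (fun f : trip => (\sum_(i < 3) f i)%R).

Definition Gsp (i : 'I_3) : {vspace trip} := (injc i @: Ys i)%VS.
Definition Hsp (i : 'I_3) : {vspace trip} := (injc i @: Xs i)%VS.
Definition Rsp : {vspace trip} := (\sum_(i < 3) Gsp i)%VS.
Definition X10 : {vspace trip} := (Rsp :&: lker sumc)%VS.
Definition Gpsp (i : 'I_3) : {vspace trip} := (Rsp :&: (projc i @^-1: Xs i))%VS.
Definition Hpsp (i : 'I_3) : {vspace trip} := (Rsp :&: lker (projc i))%VS.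

(* nu^1 = Phi^+ rho, viewed inside R *)
Definition nu1 (a : dterm) : {vspace trip} :=
  deval (fun i => Hpsp i :&: X10)%VS (fun i => Gpsp i :&: X10)%VS X10 a.
Definition nu0 (a : dterm) : {vspace trip} :=
  deval (fun i => X10 + Hsp i)%VS (fun i => X10 + Gsp i)%VS Rsp a.
Definition psi (i : 'I_3) (a : dterm) : {vspace trip} :=
  (X10 + (Gsp i :&: (Hpsp i + nu1 a)))%VS.

End Construction.

(* Main.v *)
Require Import Defs.
From HB Require Import structures.
From mathcomp Require Import all_boot all_order all_algebra.
Import GRing.Theory.
Local Open Scope ring_scope.
Local Open Scope vspace_scope.
Set Implicit Arguments. Unset Strict Implicit.

Lemma linfunE' (K : fieldType) (aT rT : vectType K) (f : aT -> rT) (lf : linear f) :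
  linfun f =1 f.
Proof.
move=> v. pose F : {linear aT -> rT} := HB.pack f (GRing.isLinear.Build K aT rT *:%R f lf).
exact: (lfunE F v).
Qed.

Lemma injcE (K : fieldType) (V : vectType K) (i : 'I_3) (v : V) :
  injc V i v = [ffun l : 'I_3 => if l == i then v else 0%R] :> trip V.
Proof.
rewrite /injc linfunE' // => a x y; apply/ffunP=> l; rewrite !ffunE.
by case: (l == i); rewrite ?scaler0 ?addr0.
Qed.

Lemma projcE (K : fieldType) (V : vectType K) (i : 'I_3) (f : trip V) :
  projc V i f = f i.
Proof. by rewrite /projc linfunE' // => a x y; rewrite !ffunE. Qed.

Lemma sumcE (K : fieldType) (V : vectType K) (f : trip V) :
  sumc V f = (\sum_(l < 3) f l)%R.
Proof.
rewrite /sumc linfunE' // => a x y.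
by rewrite scaler_sumr -big_split; apply: eq_bigr => l _; rewrite !ffunE.
Qed.

Lemma cover3 (i j k l : 'I_3) : i != j -> i != k -> j != k ->
  [\/ l = i, l = j | l = k].
Proof.
case: i => [[|[|[|?]]] ?] //; case: j => [[|[|[|?]]] ?] //;
case: k => [[|[|[|?]]] ?] //; case: l => [[|[|[|?]]] ?] // _ _ _;
first [ by constructor 1; apply: val_inj
      | by constructor 2; apply: val_inj
      | by constructor 3; apply: val_inj ].
Qed.

Lemma sum3 (K : fieldType) (V : vectType K) (i j k : 'I_3) (f : 'I_3 -> V) :
  i != j -> i != k -> j != k -> (\sum_(l < 3) f l = f i + f j + f k)%R.
Proof.
move=> hij hik hjk.
rewrite (bigD1 i) //= (bigD1 j) 1?eq_sym //= (bigD1 k) /=; last first.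
  by rewrite ![k == _]eq_sym (negbTE hik) (negbTE hjk).
rewrite big1 ?addr0 ?addrA // => l.
by case: (@cover3 i j k l hij hik hjk : [\/ l = i, l = j | l = k]) => ->; rewrite eqxx ?andbF.
Qed.

Lemma memG (K : fieldType) (V : vectType K) (Ys : 'I_3 -> {vspace V}) (m : 'I_3) (g : trip V) :
  (g \in Gsp Ys m) = (g m \in Ys m) && [forall l, (l != m) ==> (g l == 0%R)].
Proof.
apply/memv_imgP/andP => [[y yY ->]|[gY /forallP H]].
  rewrite injcE ffunE eqxx; split=> //; apply/forallP=> l; apply/implyP=> ne.
  by rewrite ffunE (negbTE ne).
exists (g m) => //; apply/ffunP=> l; rewrite injcE ffunE.
case: eqP => [->|/eqP ne] //.
by move/implyP: (H l) => /(_ ne)/eqP.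
Qed.

Lemma memR (K : fieldType) (V : vectType K) (Ys : 'I_3 -> {vspace V}) (f : trip V) :
  (f \in Rsp Ys) = [forall l, f l \in Ys l].
Proof.
apply/memv_sumP/forallP => [[vs Hvs ->] l|H].
  rewrite sum_ffunE (bigD1 l) //= big1 ?addr0 => [|m ne].
    by have := Hvs l isT; rewrite memG => /andP[].
  have := Hvs m isT; rewrite memG => /andP[_ /forallP/(_ l)].
  have ne' : l != m by rewrite eq_sym.
  by rewrite ne' /= => /eqP.
exists (fun m => injc V m (f m)) => [m _|]; first by apply: memv_img; exact: H.
apply/ffunP=> l; rewrite sum_ffunE (bigD1 l) //= big1 => [|m ne].
  by rewrite injcE ffunE eqxx addr0.
by rewrite injcE ffunE eq_sym (negbTE ne).
Qed.

Lemma injcR (K : fieldType) (V : vectType K) (Ys : 'I_3 -> {vspace V}) (i : 'I_3) (s : V) :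
  s \in Ys i -> injc V i s \in Rsp Ys.
Proof.
move=> sY; rewrite memR; apply/forallP=> l; rewrite injcE ffunE.
by case: eqP => [->|] //; rewrite mem0v.
Qed.

Lemma sumc_injc (K : fieldType) (V : vectType K) (i : 'I_3) (s : V) :
  sumc V (injc V i s) = s.
Proof.
rewrite sumcE (bigD1 i) //= big1 => [|m ne]; rewrite injcE ffunE ?eqxx ?addr0 //.
by rewrite (negbTE ne).
Qed.

Lemma memX10 (K : fieldType) (V : vectType K) (Ys : 'I_3 -> {vspace V}) (f : trip V) :
  (f \in X10 Ys) = (f \in Rsp Ys) && (sumc V f == 0%R).
Proof. by rewrite /X10 memv_cap memv_ker. Qed.

Lemma memGp (K : fieldType) (V : vectType K) (Xs Ys : 'I_3 -> {vspace V}) i (f : trip V) :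
  (f \in Gpsp Xs Ys i) = (f \in Rsp Ys) && (f i \in Xs i).
Proof. by rewrite /Gpsp memv_cap -memv_preim projcE. Qed.

Lemma memHp (K : fieldType) (V : vectType K) (Ys : 'I_3 -> {vspace V}) i (f : trip V) :
  (f \in Hpsp Ys i) = (f \in Rsp Ys) && (f i == 0%R).
Proof. by rewrite /Hpsp memv_cap memv_ker projcE. Qed.

Lemma capGH (K : fieldType) (V : vectType K) (Ys : 'I_3 -> {vspace V}) i
  (W : {vspace trip V}) : (W <= Rsp Ys) ->
  Gsp Ys i :&: (Hpsp Ys i + W) = injc V i @: (projc V i @: W).
Proof.
move=> sW; apply/vspaceP=> g; apply/memv_capP/memv_imgP.
  move=> [gG /memv_addP[h hH [w wW ew]]].
  exists (w i); first by apply/memv_imgP; exists w => //; rewrite projcE.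
  rewrite memHp in hH; case/andP: hH => _ /eqP hi.
  rewrite memG in gG; case/andP: gG => _ /forallP gG.
  apply/ffunP => l; rewrite injcE ffunE; case: eqP => [->|/eqP ne].
    by rewrite ew !ffunE hi add0r.
  by move/implyP: (gG l) => /(_ ne)/eqP.
move=> [u /memv_imgP[w wW ->] ->]; rewrite projcE.
have wR := subvP sW w wW.
have wiY : w i \in Ys i by move: wR; rewrite memR => /forallP.
split.
  rewrite memG injcE ffunE eqxx wiY /=; apply/forallP=> l; apply/implyP=> ne.
  by rewrite ffunE (negbTE ne).
apply/memv_addP; exists (injc V i (w i) - w)%R.
  rewrite memHp memvB ?injcR //=.
  by rewrite !ffunE injcE ffunE eqxx subrr.
by exists w => //; rewrite subrK.
Qed.

Lemma addXinj (K : fieldType) (V : vectType K) (Ys : 'I_3 -> {vspace V}) i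
  (S : {vspace V}) : (S <= Ys i) ->
  X10 Ys + injc V i @: S = Rsp Ys :&: sumc V @^-1: S.
Proof.
move=> sS; apply/vspaceP=> f; apply/memv_addP/memv_capP.
  move=> [x xX [y /memv_imgP[s sR ->] ->]]; rewrite memX10 in xX.
  case/andP: xX => xR /eqP xs.
  split; first by rewrite memvD // injcR // (subvP sS).
  by rewrite -memv_preim linearD /= xs add0r sumc_injc.
move=> [fR]; rewrite -memv_preim => fS.
exists (f - injc V i (sumc V f))%R.
  rewrite memX10 memvB ?injcR ?(subvP sS) //=.
  by rewrite linearB /= sumc_injc subrr.
by exists (injc V i (sumc V f)); rewrite ?memv_img ?subrK.
Qed.

Lemma YsR (K : fieldType) (V : vectType K) (Ys : 'I_3 -> {vspace V}) l :
  (Ys l <= sumc V @: Rsp Ys).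
Proof.
apply/subvP=> y yY; apply/memv_imgP; exists (injc V l y); first exact: injcR.
by rewrite sumc_injc.
Qed.

Lemma nu0E (K : fieldType) (V : vectType K) (Xs Ys : 'I_3 -> {vspace V})
  (hXY : forall i : 'I_3, (Xs i <= Ys i)%VS) (a : dterm) :
  nu0 Xs Ys a = Rsp Ys :&: sumc V @^-1: deval Xs Ys (sumc V @: Rsp Ys) a /\
  (deval Xs Ys (sumc V @: Rsp Ys) a <= sumc V @: Rsp Ys).
Proof.
elim: a => [l|l||a [IHa sa] b [IHb sb]|a [IHa sa] b [IHb sb]].
- split; last by apply: subv_trans (hXY l) (YsR _ _).
  exact: addXinj.
- split; last exact: YsR.
  exact: addXinj.
- split; last exact: subvv.
  apply/vspaceP=> f; rewrite /= memv_cap -memv_preim.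
  by apply/idP/andP => [fR|[]//]; split=> //; exact: memv_img.
- split; last exact: subv_trans (capvSl _ _) sa.
  change (nu0 Xs Ys (tmeet a b)) with (nu0 Xs Ys a :&: nu0 Xs Ys b).
  rewrite IHa IHb; apply/vspaceP=> f; rewrite /= !memv_cap -!memv_preim memv_cap.
  by rewrite andbACA andbb.
- split; last by rewrite /= subv_add sa sb.
  change (nu0 Xs Ys (tjoin a b)) with (nu0 Xs Ys a + nu0 Xs Ys b).
  rewrite IHa IHb; apply/vspaceP=> f; apply/memv_addP/memv_capP.
    move=> [u /memv_capP[uR uA] [v /memv_capP[vR vB] ->]].
    split; first exact: memvD.
    by rewrite -memv_preim linearD /= memv_add // memv_preim.
  move=> [fR]; rewrite -memv_preim => /memv_addP[a' aA [b' bB e]].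
  have /memv_imgP[g gR ea] := subvP sa a' aA.
  exists g; first by apply/memv_capP; split; rewrite // -memv_preim -ea.
  exists (f - g)%R; last by rewrite addrC subrK.
  apply/memv_capP; split; first exact: memvB.
  by rewrite -memv_preim linearB /= e ea addrC addKr.
Qed.

Lemma nu1X (K : fieldType) (V : vectType K) (Xs Ys : 'I_3 -> {vspace V}) (a : dterm) :
  (nu1 Xs Ys a <= X10 Ys).
Proof.
elim: a => [l|l||a IHa b IHb|a IHa b IHb].
- exact: capvSr.
- exact: capvSr.
- exact: subvv.
- change (nu1 Xs Ys (tmeet a b)) with (nu1 Xs Ys a :&: nu1 Xs Ys b).
  exact: subv_trans (capvSl _ _) IHa.
- change (nu1 Xs Ys (tjoin a b)) with (nu1 Xs Ys a + nu1 Xs Ys b).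
  by rewrite subv_add IHa IHb.
Qed.

Lemma nu1R (K : fieldType) (V : vectType K) (Xs Ys : 'I_3 -> {vspace V}) (a : dterm) :
  (nu1 Xs Ys a <= Rsp Ys).
Proof. exact: subv_trans (nu1X _ _ _) (capvSl _ _). Qed.

Lemma psiE (K : fieldType) (V : vectType K) (Xs Ys : 'I_3 -> {vspace V}) i (a : dterm) :
  psi Xs Ys i a = Rsp Ys :&: sumc V @^-1: (projc V i @: nu1 Xs Ys a).
Proof.
rewrite /psi capGH ?nu1R // addXinj //.
apply/subvP => v /memv_imgP[w wW ->]; rewrite projcE.
by move: (subvP (nu1R _ _ _) w wW); rewrite memR => /forallP.
Qed.

Lemma projgen (K : fieldType) (V : vectType K) (Ys : 'I_3 -> {vspace V})
  (i j k : 'I_3) (hij : i != j) (hik : i != k) (hjk : j != k)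
  (W : {vspace trip V}) (C A B : {vspace V}) :
  (A <= Ys j) -> (B <= Ys k) ->
  (forall w, w \in W = [&& w \in Rsp Ys, sumc V w == 0%R, w i \in C, w j \in A & w k \in B]) ->
  projc V i @: W = Ys i :&: C :&: (A + B).
Proof.
move=> sA sB HW; apply/vspaceP=> v; apply/memv_imgP/idP.
  move=> [w]; rewrite HW => /and5P[wR ws wC wA wB] ->.
  have wiY : w i \in Ys i by move: wR; rewrite memR => /forallP.
  rewrite projcE !memv_cap wiY wC /=.
  have -> : w i = (- w j + - w k)%R.
    apply/eqP; rewrite -subr_eq0 opprD !opprK addrA.
    by rewrite sumcE (sum3 _ hij hik hjk) in ws.
  by rewrite memv_add // memvN.
rewrite !memv_cap => /andP[/andP[vY vC] /memv_addP[a aA [b bB ev]]]; subst v.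
have ji : (j == i) = false by rewrite eq_sym (negbTE hij).
have ki : (k == i) = false by rewrite eq_sym (negbTE hik).
have kj : (k == j) = false by rewrite eq_sym (negbTE hjk).
exists ([ffun l => if l == i then (a + b)%R else if l == j then (- a)%R else (- b)%R] : trip V);
  last by rewrite projcE ffunE eqxx.
rewrite HW !ffunE eqxx ji kj ki eqxx vC !memvN aA bB /=.
rewrite sumcE (sum3 _ hij hik hjk) !ffunE eqxx ji kj ki eqxx.
rewrite addrAC addrK subrr eqxx !andbT memR; apply/forallP=> l.
case: (cover3 l hij hik hjk) => ->; rewrite ffunE ?eqxx ?ji ?ki ?kj ?memvN //.
- exact: (subvP sA).
- exact: (subvP sB).
Qed.

Ltac bfin := do ![match goal with
  | |- context[?x \in ?y] => case: (x \in y)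
  | |- context[?x == ?y] => case: (x == y) end].

Ltac charac := move=> ?; rewrite /nu1 /= ?memv_cap ?memv_ker -?memv_preim ?projcE ?memvf ?memv0;
  let wR := fresh "wR" in let H := fresh "H" in
  case wR: (_ \in Rsp _) => //=; move: wR; rewrite memR => /forallP H; rewrite ?H; bfin.

Unset Implicit Arguments.

Theorem mainTheorem2 (K : fieldType) (V : vectType K)
    (Xs Ys : 'I_3 -> {vspace V})
    (hXY : forall i : 'I_3, (Xs i <= Ys i)%VS)
    (i j k : 'I_3) (hij : i != j) (hik : i != k) (hjk : j != k) :
  (psi Xs Ys i (tx i) = X10 Ys) /\
     (
      psi Xs Ys i (tx j) = nu0 Xs Ys (tmeet (ty i) (ty k))
        /\ psi Xs Ys k (tx j) = nu0 Xs Ys (tmeet (ty i) (ty k))) /\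
     (psi Xs Ys i (ty i) = nu0 Xs Ys (tmeet (tx i) (tjoin (ty j) (ty k)))) /\
     (psi Xs Ys i (ty j) = nu0 Xs Ys (tmeet (ty i) (tjoin (tx j) (ty k)))) /\
     (psi Xs Ys i tI = nu0 Xs Ys (tmeet (ty i) (tjoin (ty j) (ty k)))) /\
     (psi Xs Ys i (tmeet (ty j) (ty k)) = nu0 Xs Ys (tmeet (ty i) (tjoin (tx j) (tx k)))).
Proof.
have nuE := nu0E hXY.
have hji : j != i by rewrite eq_sym.
have hki : k != i by rewrite eq_sym.
have hkj : k != j by rewrite eq_sym.
split.
  rewrite /psi capGH ?nu1R //.
  have -> : projc V i @: nu1 Xs Ys (tx i) = 0%VS.
    apply/vspaceP=> v; rewrite memv0; apply/memv_imgP/eqP => [[w]|->].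
      by rewrite /nu1 /= memv_cap memHp => /andP[/andP[_ /eqP wi] _] ->; rewrite projcE.
    by exists 0%R; [exact: mem0v | rewrite linear0].
  by rewrite limg0 addv0.
split; [split|].
  have ch : forall w, w \in nu1 Xs Ys (tx j) = [&& w \in Rsp Ys, sumc V w == 0%R,
      w i \in fullv, w j \in 0%VS & w k \in Ys k] by charac.
  rewrite psiE (nuE _).1 /= (projgen hij hik hjk (sub0v _) (subvv _) ch).
  by rewrite capvf add0v.
  have ch : forall w, w \in nu1 Xs Ys (tx j) = [&& w \in Rsp Ys, sumc V w == 0%R,
      w k \in fullv, w j \in 0%VS & w i \in Ys i] by charac.
  rewrite psiE (nuE _).1 /= (projgen hkj hki hji (sub0v _) (subvv _) ch).
  by rewrite capvf add0v (capvC (Ys k)).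
split.
  have ch : forall w, w \in nu1 Xs Ys (ty i) = [&& w \in Rsp Ys, sumc V w == 0%R,
      w i \in Xs i, w j \in Ys j & w k \in Ys k] by charac.
  rewrite psiE (nuE _).1 /= (projgen hij hik hjk (subvv _) (subvv _) ch).
  by rewrite (capv_idPr (hXY i)).
split.
  have ch : forall w, w \in nu1 Xs Ys (ty j) = [&& w \in Rsp Ys, sumc V w == 0%R,
      w i \in fullv, w j \in Xs j & w k \in Ys k] by charac.
  rewrite psiE (nuE _).1 /= (projgen hij hik hjk (hXY j) (subvv _) ch).
  by rewrite capvf.
split.
  have ch : forall w, w \in nu1 Xs Ys tI = [&& w \in Rsp Ys, sumc V w == 0%R,
      w i \in fullv, w j \in Ys j & w k \in Ys k] by charac.
  rewrite psiE (nuE _).1 /= (projgen hij hik hjk (subvv _) (subvv _) ch).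
  by rewrite capvf.
have ch : forall w, w \in nu1 Xs Ys (tmeet (ty j) (ty k)) = [&& w \in Rsp Ys, sumc V w == 0%R,
    w i \in fullv, w j \in Xs j & w k \in Xs k] by charac.
rewrite psiE (nuE _).1 /= (projgen hij hik hjk (hXY j) (hXY k) ch).
by rewrite capvf.
Qed.
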